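(* Let $I\subset\mathbb{R}$ be an interval, let $n\in\mathbb{N}$ be odd, and let $f:I\to\mathbb{R}$ be $n$-convex. Then for every $x_1$ in the interior of $I$ there exists a polynomial $p\in\Pi_n$ such that $p(x_1)=f(x_1)$ and $p(x)\le f(x)$ for all $x\in I$.
   Context: $\Pi_n$ denotes the set of real polynomials of degree at most $n$. Divided differences are defined recursively by $[x_1;f]:=f(x_1)$ and $[x_1,\dots,x_{m+1};f]:=\frac{[x_2,\dots,x_{m+1};f]-[x_1,\dots,x_m;f]}{x_{m+1}-x_1}$ for pairwise distinct points. For $n\in\mathbb{N}$, a function $f:I\to\mathbb{R}$ is called $n$-convex if $[x_1,\dots,x_{n+2};f]\ge 0$ for all pairwise distinct $x_1,\dots,x_{n+2}\in I$. *)

(* Defs.v *)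
From HB Require Import structures.
From mathcomp Require Import all_boot all_order all_algebra.
From mathcomp Require Import reals.
Set Implicit Arguments. Unset Strict Implicit. Unset Printing Implicit Defensive.
Import Order.TTheory GRing.Theory Num.Theory.
Local Open Scope ring_scope.

(* divdiff f x i m = [x_i, x_{i+1}, ..., x_{i+m}; f], following the recursion
   [x_1;f] = f x_1,
   [x_1,...,x_{m+1};f] = ([x_2,...,x_{m+1};f] - [x_1,...,x_m;f]) / (x_{m+1} - x_1). *)
Fixpoint divdiff (R : realType) (f : R -> R) (x : nat -> R) (i m : nat) : R :=
  match m with
  | 0 => f (x i)
  | m'.+1 => (divdiff f x i.+1 m' - divdiff f x i m') / (x (i + m'.+1)%N - x i)
  end.

Definition n_convex (R : realType) (n : nat) (I : interval R) (f : R -> R) : Prop :=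
  forall x : nat -> R,
    (forall i, (i < n.+2)%N -> x i \in I) ->
    (forall i j, (i < n.+2)%N -> (j < n.+2)%N -> i != j -> x i != x j) ->
    0 <= divdiff f x 0 n.+1.

Definition in_interior (R : realType) (I : interval R) (x : R) : Prop :=
  exists e : R, 0 < e /\ forall y : R, `|y - x| < e -> y \in I.

(* Main.v *)
Require Import Defs.
From HB Require Import structures.
From mathcomp Require Import all_boot all_order all_algebra.
From mathcomp Require Import reals.
From mathcomp Require Import zify ring lra.
Import Order.TTheory GRing.Theory Num.Theory.
Local Open Scope ring_scope.
Set Implicit Arguments. Unset Strict Implicit. Unset Printing Implicit Defensive.
Definition DD (R : realType) (f : R -> R) (s : seq R) : R :=
  \sum_(a <- s) f a / \prod_(b <- s | b != a) (a - b).

Lemma prod_notin (R : realType) (a : R) (s : seq R) (F : R -> R) :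
  a \notin s -> \prod_(b <- s | b != a) F b = \prod_(b <- s) F b.
Proof.
move=> as_; rewrite big_seq_cond [RHS]big_seq; apply: eq_bigl => b /=.
case bs: (b \in s) => //=; apply/eqP => ba; move: as_; by rewrite -ba bs.
Qed.

Lemma prod_neq0 (R : realType) (a : R) (s : seq R) :
  a \notin s -> \prod_(b <- s) (a - b) != 0.
Proof.
move=> as_; rewrite prodf_seq_neq0; apply/allP => b bs /=.
by rewrite subr_eq0; apply/eqP => ab; move: as_; rewrite ab bs.
Qed.

Lemma DD_perm (R : realType) (f : R -> R) s s' : perm_eq s s' -> DD f s = DD f s'.
Proof.
move=> pss; rewrite /DD (perm_big _ pss); apply: eq_bigr => a _.
by rewrite (perm_big _ pss).
Qed.

Lemma DD1 (R : realType) (f : R -> R) a : DD f [:: a] = f a.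
Proof. by rewrite /DD big_cons big_nil big_cons big_nil eqxx /= divr1 addr0. Qed.

Lemma DD_rec (R : realType) (f : R -> R) a b s : uniq (a :: b :: s) ->
  DD f (a :: b :: s) = (DD f (a :: s) - DD f (b :: s)) / (a - b).
Proof.
rewrite /= !inE negb_or => /andP[/andP[ab as_] /andP[bs us]].
have ab' : a - b != 0 by rewrite subr_eq0.
have ba_ : (b != a) by rewrite eq_sym.
rewrite /DD !big_cons !eqxx /= ba_ ab.
rewrite !prod_notin //.
have Ha := prod_neq0 as_; have Hb := prod_neq0 bs.
have E1 : \sum_(c <- s) f c / \prod_(d <- [:: a, b & s] | d != c) (c - d) =
   \sum_(c <- s) f c / ((c - a) * (c - b) * \prod_(d <- s | d != c) (c - d)).
  rewrite big_seq [RHS]big_seq; apply: eq_bigr => c cs.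
  rewrite !big_cons.
  have -> : (a != c) by apply/eqP => E; move: as_; rewrite E cs.
  have -> : (b != c) by apply/eqP => E; move: bs; rewrite E cs.
  by rewrite mulrA.
have Ea : \sum_(c <- s) f c / \prod_(d <- a :: s | d != c) (c - d) =
   \sum_(c <- s) f c / ((c - a) * \prod_(d <- s | d != c) (c - d)).
  rewrite big_seq [RHS]big_seq; apply: eq_bigr => c cs.
  rewrite !big_cons.
  by have -> : (a != c) by apply/eqP => E; move: as_; rewrite E cs.
have Eb : \sum_(c <- s) f c / \prod_(d <- b :: s | d != c) (c - d) =
   \sum_(c <- s) f c / ((c - b) * \prod_(d <- s | d != c) (c - d)).
  rewrite big_seq [RHS]big_seq; apply: eq_bigr => c cs.
  rewrite !big_cons.
  by have -> : (b != c) by apply/eqP => E; move: bs; rewrite E cs.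
have E3 : \sum_(c <- s) f c / ((c - a) * (c - b) * \prod_(d <- s | d != c) (c - d)) =
  (\sum_(c <- s) f c / ((c - a) * \prod_(d <- s | d != c) (c - d)) -
   \sum_(c <- s) f c / ((c - b) * \prod_(d <- s | d != c) (c - d))) / (a - b).
  rewrite -sumrB mulr_suml big_seq [RHS]big_seq; apply: eq_bigr => c cs.
  have ca : c - a != 0 by rewrite subr_eq0; apply/eqP => E; move: as_; rewrite -E cs.
  have cb : c - b != 0 by rewrite subr_eq0; apply/eqP => E; move: bs; rewrite -E cs.
  have Q : \prod_(d <- s | d != c) (c - d) != 0.
    rewrite prodf_seq_neq0; apply/allP => d ds /=; apply/implyP => dc.
    by rewrite subr_eq0 eq_sym.
  by field; rewrite ab' ca cb Q.
rewrite E1 Ea Eb E3.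
move: (\sum_(c <- s) _) (\sum_(c <- s) _) => S1 S2.
have ba : b - a != 0 by rewrite subr_eq0 eq_sym.
by field; rewrite ab' Ha Hb ba.
Qed.

Lemma pCA (T : eqType) (s1 s2 s3 : seq T) : perm_eq (s1 ++ s2 ++ s3) (s2 ++ s1 ++ s3).
Proof. by rewrite perm_catCA. Qed.

Lemma DD2 (R : realType) (f : R -> R) a b : a != b -> DD f [:: a; b] = (f a - f b) / (a - b).
Proof. by move=> ab; rewrite DD_rec ?DD1 //= inE andbT. Qed.

Lemma divdiff_DD (R : realType) (f : R -> R) (x : nat -> R) m i :
  uniq (map x (iota i m.+1)) -> divdiff f x i m = DD f (map x (iota i m.+1)).
Proof.
elim: m i => [|m IH] i.
  by move=> _; rewrite /= DD1.
have E : iota i m.+2 = i :: (iota i.+1 m ++ [:: i + m.+1]%N).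
  have -> : m.+2 = (m.+1 + 1)%N by rewrite addn1.
  by rewrite iotaD.
rewrite E map_cons map_cat /= => U.
set mid := map x (iota i.+1 m) in U *.
have U1 : uniq (mid ++ [:: x (i + m.+1)%N]) by case/andP: U.
have U2 : uniq (x i :: mid).
  move: U; rewrite /= mem_cat negb_or cat_uniq => /and3P[/andP[-> _] -> _] //.
have Pa : perm_eq (x i :: mid ++ [:: x (i + m.+1)%N]) (x (i + m.+1)%N :: x i :: mid).
  by rewrite -cat_cons perm_catC.
rewrite (DD_perm _ Pa) DD_rec; last by rewrite -(perm_uniq Pa).
have E1 : map x (iota i.+1 m.+1) = mid ++ [:: x (i + m.+1)%N].
  by rewrite -(addn1 m) iotaD map_cat /= !addn1 addSnnS.
rewrite IH ?E1 // IH //.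
have E2 : map x (iota i m.+1) = x i :: mid by [].
rewrite E2; congr ((_ - _) / _).
by apply: DD_perm; rewrite perm_catC.
Qed.

Definition convS (R : realType) (m : nat) (I : interval R) (f : R -> R) : Prop :=
  forall s : seq R, uniq s -> size s = m.+2 -> (forall y, y \in s -> y \in I) -> 0 <= DD f s.

Lemma nconv_convS (R : realType) (n : nat) (I : interval R) (f : R -> R) :
  n_convex n I f -> convS n I f.
Proof.
move=> H s us ss sI.
have := H (nth 0 s).
have -> : divdiff f (nth 0 s) 0 n.+1 = DD f s.
  rewrite divdiff_DD; first by rewrite -ss -/(mkseq _ _) mkseq_nth.
  by rewrite -ss -/(mkseq _ _) mkseq_nth.
apply.
  by move=> i ilt; apply: sI; apply: mem_nth; rewrite ss.
by move=> i j il jl ij; rewrite nth_uniq ?ss.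
Qed.

Ltac split_hyps := repeat match goal with H : is_true (_ && _) |- _ => case/andP: H => ? ? end.
Ltac utac := rewrite /= ?inE ?negb_or => ?; split_hyps; repeat (apply/andP; split); try assumption;
  try (rewrite eq_sym; assumption).

Definition gext (R : realType) (f : R -> R) (x1 c : R) (y : R) : R :=
  if y == x1 then c else (f y - f x1) / (y - x1).

Lemma DD_gext_aux (R : realType) (f : R -> R) x1 c n : forall Y : seq R,
  (size Y <= n.+1)%N -> uniq (x1 :: Y) -> Y != [::] -> DD (gext f x1 c) Y = DD f (x1 :: Y).
Proof.
elim: n => [|n IH] [|a [|b Y1]] //=.
- move=> _; rewrite inE andbT => x1a _.
  rewrite DD1 DD2 // /gext eq_sym (negbTE x1a).
  have : a - x1 != 0 by rewrite subr_eq0 eq_sym.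
  have : x1 - a != 0 by rewrite subr_eq0.
  by move=> h1 h2; field; rewrite h1 h2.
- move=> _; rewrite inE andbT => x1a _.
  rewrite DD1 DD2 // /gext eq_sym (negbTE x1a).
  have : a - x1 != 0 by rewrite subr_eq0 eq_sym.
  have : x1 - a != 0 by rewrite subr_eq0.
  by move=> h1 h2; field; rewrite h1 h2.
move=> sz U _.
have U' : uniq [:: a, b & Y1] by case/andP: U.
have U2 : uniq [:: x1, a & Y1] by move: U; utac.
have U3 : uniq [:: x1, b & Y1] by move: U; utac.
rewrite (@DD_rec _ _ a b Y1) // !IH //.
have P : perm_eq [:: x1, a, b & Y1] [:: a, b, x1 & Y1] by exact: (pCA [:: x1] [:: a; b] Y1).
rewrite (DD_perm _ P) (@DD_rec _ _ a b (x1 :: Y1)); last by move: U; utac.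
have Pa : perm_eq [:: x1, a & Y1] [:: a, x1 & Y1] by exact: (pCA [:: x1] [:: a] Y1).
have Pb : perm_eq [:: x1, b & Y1] [:: b, x1 & Y1] by exact: (pCA [:: x1] [:: b] Y1).
by rewrite (DD_perm _ Pa) (DD_perm _ Pb).
Qed.

Lemma DD_gext (R : realType) (f : R -> R) x1 c (Y : seq R) :
  uniq (x1 :: Y) -> Y != [::] -> DD (gext f x1 c) Y = DD f (x1 :: Y).
Proof. by apply: (@DD_gext_aux _ _ _ _ (size Y)). Qed.

Definition pi (R : realType) (x1 : R) (S : seq R) : R := \prod_(r <- S) (x1 - r).

Fixpoint Vf (R : realType) (f : R -> R) (x1 : R) (S : seq R) : R :=
  match S with
  | [::] => 0
  | s :: S' => Vf f x1 S' + pi x1 S' * DD f (x1 :: s :: S')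
  end.

Lemma pi_neq0 (R : realType) (x1 : R) S : x1 \notin S -> pi x1 S != 0.
Proof. exact: prod_neq0. Qed.

Lemma pi_cons (R : realType) (x1 : R) s S : pi x1 (s :: S) = (x1 - s) * pi x1 S.
Proof. by rewrite /pi big_cons. Qed.

Lemma pi_perm (R : realType) (x1 : R) S S' : perm_eq S S' -> pi x1 S = pi x1 S'.
Proof. by move=> P; rewrite /pi (perm_big _ P). Qed.

Lemma V_rel (R : realType) (f : R -> R) x1 c (S : seq R) : uniq (x1 :: S) ->
  DD (gext f x1 c) (x1 :: S) = (c - Vf f x1 S) / pi x1 S.
Proof.
elim: S => [|s S IH].
  by move=> _; rewrite DD1 /gext eqxx /pi big_nil subr0 divr1.
move=> U.
have xs : x1 != s by move: U; rewrite /= inE => /andP[/norP[]].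
have U1 : uniq (x1 :: S).
  by move: U; rewrite /= inE => /andP[/norP[_ ->] /andP[_ ->]].
have P : perm_eq [:: x1, s & S] [:: s, x1 & S] by exact: (pCA [:: x1] [:: s] S).
rewrite (DD_perm _ P) (@DD_rec _ _ s x1 S); last by move: U; utac.
rewrite DD_gext //.
rewrite IH //= pi_cons.
have h1 : pi x1 S != 0 by apply: pi_neq0; case/andP: U1.
have h2 : s - x1 != 0 by rewrite subr_eq0 eq_sym.
have h3 : x1 - s != 0 by rewrite subr_eq0.
by field; rewrite h1 h2 h3.
Qed.

Lemma V_perm (R : realType) (f : R -> R) x1 S S' : uniq (x1 :: S) -> perm_eq S S' ->
  Vf f x1 S = Vf f x1 S'.
Proof.
move=> U P.
have P' : perm_eq (x1 :: S) (x1 :: S') by rewrite perm_cons.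
have U' : uniq (x1 :: S') by rewrite -(perm_uniq P').
have h1 := V_rel f 0 U; have h2 := V_rel f 0 U'.
rewrite (DD_perm _ P') h2 (pi_perm _ P) in h1.
have : pi x1 S' != 0 by apply: pi_neq0; case/andP: U'.
move=> h; move/(congr1 (fun z => z * pi x1 S')): h1.
by rewrite !mulfVK // !sub0r => /oppr_inj.
Qed.

Lemma V_exch (R : realType) (f : R -> R) x1 t s S : uniq [:: x1, t, s & S] ->
  Vf f x1 (t :: S) - Vf f x1 (s :: S) = pi x1 S * (t - s) * DD f [:: t, s, x1 & S].
Proof.
move=> U.
have ts : t - s != 0 by rewrite subr_eq0; move: U; utac.
rewrite DD_rec; last by move: U; utac.
rewrite /= (DD_perm _ (pCA [:: t] [:: x1] S)) (DD_perm _ (pCA [:: s] [:: x1] S)) /=.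
by field.
Qed.

Ltac orb_close := repeat (rewrite ?orbT ?orTb); try done.
Ltac memtac := let y := fresh "y" in let H := fresh "H" in
  move=> y H; rewrite ?(mem_cat, mem_rcons, inE) in H *;
  repeat (case/orP: H => H); rewrite ?H; orb_close.

Lemma step_move (R : realType) M (I : interval R) (f : R -> R) a b w :
  convS M I f -> a < b -> uniq (a :: b :: w) -> size w = M ->
  (forall y, y \in a :: b :: w -> y \in I) -> DD f (a :: w) <= DD f (b :: w).
Proof.
move=> H ab U sw wI.
have P : perm_eq [:: a, b & w] [:: b, a & w] by exact: (pCA [:: a] [:: b] w).
have U' : uniq [:: b, a & w] by rewrite -(perm_uniq P).
rewrite -sw in H; have h := H _ U' erefl.
rewrite DD_rec // in h.
have ba : 0 < b - a by rewrite subr_gt0.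
have h' : 0 <= (DD f (b :: w) - DD f (a :: w)) / (b - a).
  by apply: h => y; rewrite -(perm_mem P); apply: wI.
by rewrite -subr_ge0; move: h'; rewrite pmulr_lge0 // invr_gt0.
Qed.

Lemma moving (R : realType) M (I : interval R) (f : R -> R) :
  convS M I f -> forall s t u : seq R, size s = size t ->
  (forall x y, x \in s -> y \in t -> x < y) -> uniq (s ++ u) -> uniq (t ++ u) ->
  (size (s ++ u) = M.+1)%N ->
  (forall y, y \in s ++ t ++ u -> y \in I) -> DD f (s ++ u) <= DD f (t ++ u).
Proof.
move=> H; elim=> [|a s IH] [|b t] u //= [st] lt U1 U2 sz sI.
have ab : a < b by apply: lt; rewrite inE eqxx.
have bs : b \notin s.
  by apply/negP => bs; have := lt b b; rewrite !inE bs eqxx orbT => /(_ isT isT); rewrite ltxx.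
have bsu : b \notin s ++ u.
  by rewrite mem_cat negb_or bs /=; move: U2; rewrite /= mem_cat negb_or => /andP[/andP[_ ->]].
have U3 : uniq (b :: s ++ u) by rewrite /= bsu; case/andP: U1.
have U4 : uniq (a :: b :: s ++ u).
  rewrite cons_uniq U3 andbT inE negb_or; case/andP: U1 => -> _; rewrite andbT.
  by rewrite lt_eqF.
apply: (le_trans (step_move H ab U4 _ _)).
- by move: sz; rewrite size_cat => [[]].
- by move=> y yy; apply: sI; move: y yy; memtac.
have P1 : perm_eq (b :: s ++ u) (s ++ b :: u) by exact: (pCA [:: b] s u).
have P2 : perm_eq (b :: t ++ u) (t ++ b :: u) by exact: (pCA [:: b] t u).
rewrite (DD_perm _ P1) (DD_perm _ P2).
apply: IH => //.
- by move=> x y xs yt; apply: lt; rewrite inE ?xs ?yt ?orbT.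
- by rewrite -(perm_uniq P1).
- by rewrite -(perm_uniq P2).
- by rewrite size_cat /= addnS -size_cat.
- by move=> y yy; apply: sI; move: y yy; memtac.
Qed.

Definition pts (R : realType) (a d : R) (k : nat) : seq R :=
  mkseq (fun i => a + d / (i.+1)%:R) k.

Lemma divn_inj (R : realType) (d : R) (i j : nat) : d != 0 ->
  d / (i.+1)%:R = d / (j.+1)%:R -> i = j.
Proof.
move=> d0 /(congr1 (fun z => d^-1 * z)); rewrite !mulKf // => /invr_inj /eqP.
by rewrite eqr_nat => /eqP [].
Qed.

Lemma pts_uniq (R : realType) (a d : R) k : d != 0 -> uniq (pts a d k).
Proof.
move=> d0; apply: mkseq_uniq => i j /= /addrI; exact: divn_inj.
Qed.

Lemma pts_mem (R : realType) (a d : R) k y : y \in pts a d k ->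
  exists i, y = a + d / (i.+1)%:R.
Proof. by case/mapP => i _ ->; exists i. Qed.

Lemma frac_bounds (R : realType) (d : R) (i : nat) : 0 < d ->
  0 < d / (i.+1)%:R /\ d / (i.+1)%:R <= d.
Proof.
move=> d0; split; first by rewrite divr_gt0 // ltr0n.
rewrite ler_pdivrMr ?ltr0n // ler_peMr ?(ltW d0) //.
by rewrite ler1n.
Qed.

Lemma Kbound (R : realType) M (I : interval R) (f : R -> R) x1 e :
  convS M I f -> 0 < e -> (forall y, `|y - x1| < e -> y \in I) ->
  exists K : R, forall Z : seq R, uniq Z -> size Z = M.+1 ->
    (forall z, z \in Z -> `|z - x1| <= e / 2) -> `|DD f Z| <= K.
Proof.
move=> H e0 ball.
set Zr := pts (x1 + e / 2) (e / 4) M.+1.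
set Zl := pts (x1 - e / 2) (- (e / 4)) M.+1.
exists (`|DD f Zl| + `|DD f Zr|) => Z uZ sZ wZ.
have e4 : 0 < e / 4 by rewrite divr_gt0.
have e4' : e / 4 != 0 by rewrite gt_eqF.
have e4n : - (e / 4) != 0 by rewrite oppr_eq0.
have inZ : forall z, z \in Z -> x1 - e / 2 <= z <= x1 + e / 2.
  by move=> z /wZ; rewrite ler_norml; move=> /andP[h1 h2]; apply/andP; split; lra.
have inZr : forall z, z \in Zr -> x1 + e / 2 < z <= x1 + 3 * e / 4.
  move=> z /pts_mem [i ->]; have [h1 h2] := frac_bounds i e4.
  move: h1 h2; set q := e / 4 / _ => h1 h2.
  by apply/andP; split; lra.
have inZl : forall z, z \in Zl -> x1 - 3 * e / 4 <= z < x1 - e / 2.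
  move=> z /pts_mem [i ->]; have [h1 h2] := frac_bounds i e4.
  move: h1 h2; rewrite mulNr; set q := e / 4 / _ => h1 h2.
  by apply/andP; split; lra.
have Iz : forall z, x1 - 3 * e / 4 <= z <= x1 + 3 * e / 4 -> z \in I.
  move=> z /andP[h1 h2]; apply: ball; rewrite ltr_norml; apply/andP; split; lra.
have h1 : DD f Z <= DD f Zr.
  rewrite -(cats0 Z) -(cats0 Zr); apply: (moving H).
  - by rewrite size_mkseq.
  - move=> x y /inZ /andP[_ hx] /inZr /andP[hy _]; lra.
  - by rewrite cats0.
  - by rewrite cats0 pts_uniq.
  - by rewrite cats0.
  - move=> y; rewrite cats0 mem_cat => /orP[/inZ|/inZr] /andP[h3 h4]; apply: Iz;
    apply/andP; split; lra.
have h2 : DD f Zl <= DD f Z.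
  rewrite -(cats0 Z) -(cats0 Zl); apply: (moving H).
  - by rewrite size_mkseq.
  - move=> x y /inZl /andP[_ hx] /inZ /andP[hy _]; lra.
  - by rewrite cats0 pts_uniq.
  - by rewrite cats0.
  - by rewrite cats0 size_mkseq.
  - move=> y; rewrite cats0 mem_cat => /orP[/inZl|/inZ] /andP[h3 h4]; apply: Iz;
    apply/andP; split; lra.
have h3 := ler_norm (DD f Zr).
have h4 : - `|DD f Zl| <= DD f Zl by rewrite lerNl -normrN ler_norm.
have h5 := normr_ge0 (DD f Zl); have h6 := normr_ge0 (DD f Zr).
rewrite ler_norml; apply/andP; split; lra.
Qed.

Ltac ptac := apply/permP => ?; rewrite /= ?count_cat /= -?cats1 ?count_cat /=; ring.

Lemma sign_comb (R : realType) (pX pY pZ vX vY vZ : R) :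
  0 <= pX * (vY - vX) -> 0 < pX * pY -> 0 <= pY * (vZ - vY) -> 0 < pY * pZ ->
  0 <= pX * (vZ - vX) /\ 0 < pX * pZ.
Proof. move=> h1 h2 h3 h4; split; nra. Qed.

Fixpoint tg (R : realType) (x1 d : R) (i : nat) (S : seq R) : seq R :=
  match S with
  | [::] => [::]
  | s :: S' => (if s < x1 then x1 - d / (i.+1)%:R else x1 + d / (i.+1)%:R) :: tg x1 d i.+2 S'
  end.

Lemma tg_size (R : realType) (x1 d : R) i S : size (tg x1 d i S) = size S.
Proof. by elim: S i => [|s S IH] i //=; rewrite IH. Qed.

Lemma tg_dist (R : realType) (x1 d : R) i S t : 0 < d -> t \in tg x1 d i S ->
  exists k, `|t - x1| = d / (i + k.*2).+1%:R.
Proof.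
move=> d0; elim: S i => [|s S IH] i //=; rewrite inE => /orP[/eqP ->|].
  exists 0%N; rewrite addn0.
  have h : 0 < d / (i.+1)%:R by rewrite divr_gt0 // ltr0n.
  by case: ifP => _; rewrite (addrC x1) addrK ?normrN gtr0_norm.
move=> /IH [k ->]; exists k.+1; congr (_ / _); congr (_%:R); lia.
Qed.

Lemma tg_uniq (R : realType) (x1 d : R) i S : 0 < d -> uniq (tg x1 d i S).
Proof.
move=> d0; elim: S i => [|s S IH] i //=; rewrite IH andbT.
apply/negP => /(tg_dist d0) [k].
have h : 0 < d / (i.+1)%:R by rewrite divr_gt0 // ltr0n.
case: ifP => _; rewrite (addrC x1) addrK ?normrN gtr0_norm //.
  move/(divn_inj (lt0r_neq0 d0)); lia.
move/(divn_inj (lt0r_neq0 d0)); lia.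
Qed.

Lemma tg_small (R : realType) (x1 d : R) i S t : 0 < d -> (0 < i)%N -> t \in tg x1 d i S ->
  0 < `|t - x1| < d.
Proof.
move=> d0 i0 /(tg_dist d0) [k ->]; apply/andP; split.
  by rewrite divr_gt0 // ltr0n.
rewrite ltr_pdivrMr ?ltr0n // ltr_pMr // ltr1n; lia.
Qed.

Lemma tg_disj (R : realType) (x1 d : R) S S' t t' : 0 < d ->
  t \in tg x1 d 1 S -> t' \in tg x1 d 2 S' -> t != t'.
Proof.
move=> d0 /(tg_dist d0) [k hk] /(tg_dist d0) [k' hk'].
apply/eqP => E; move: hk; rewrite E hk' => /(divn_inj (lt0r_neq0 d0)); lia.
Qed.

Lemma tg_side (R : realType) (x1 d : R) i s S : 0 < d -> (0 < i)%N -> d <= `|s - x1| ->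
  let t := head 0 (tg x1 d i (s :: S)) in
  0 <= (x1 - s) * (t - s) /\ 0 < (x1 - s) * (x1 - t).
Proof.
move=> d0 i0 hs /=.
have [h1 h2] := frac_bounds i d0.
have h3 : d / (i.+1)%:R < d.
  by rewrite ltr_pdivrMr ?ltr0n // ltr_pMr // ltr1n; lia.
move: h1 h2 h3; set q := d / _ => h1 h2 h3.
case: ifP => sx.
  move: hs; rewrite ltr0_norm ?subr_lt0 // => hs; split; nra.
move: sx hs => /negbT; rewrite -leNgt => sx; rewrite ger0_norm ?subr_ge0 // => hs.
split; nra.
Qed.

Lemma uniq_sub (T : eqType) (l l1 l2 : seq T) : uniq l -> perm_eq l (l1 ++ l2) -> uniq l1.
Proof. by move=> u p; move: u; rewrite (perm_uniq p) cat_uniq => /andP[]. Qed.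

Lemma sq_pos (R : realType) (p : R) : p != 0 -> 0 < p * p.
Proof. by move=> h; rewrite lt0r mulf_neq0 //= -expr2 sqr_ge0. Qed.

Lemma chain1 (R : realType) m (I : interval R) (f : R -> R) (x1 d : R) :
  convS m.+1 I f -> x1 \in I -> 0 < d ->
  forall S A i, (0 < i)%N -> (forall s, s \in S -> d <= `|s - x1|) ->
  uniq (x1 :: A ++ S ++ tg x1 d i S) ->
  (forall y, y \in A ++ S ++ tg x1 d i S -> y \in I) ->
  (size A + size S = m.+1)%N ->
  0 <= pi x1 (A ++ S) * (Vf f x1 (A ++ tg x1 d i S) - Vf f x1 (A ++ S)) /\
  0 < pi x1 (A ++ S) * pi x1 (A ++ tg x1 d i S).
Proof.
move=> H xI d0; elim=> [|s S IH] A i i0 hS U AI sz.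
  rewrite /= subrr mulr0; split => //; rewrite cats0; apply: sq_pos.
  by apply: pi_neq0; move: U; rewrite cats0 /= => /andP[].
have [hg1 hg2] := tg_side S d0 i0 (hS s (mem_head _ _)).
rewrite /= in hg1 hg2.
set t := (if s < x1 then _ else _) in hg1 hg2.
have E : tg x1 d i (s :: S) = t :: tg x1 d i.+2 S by [].
rewrite E in U AI *.
set T' := tg x1 d i.+2 S in U AI *.
have U' : uniq (x1 :: rcons A t ++ S ++ T').
  by apply: (@uniq_sub _ _ _ [:: s] U); ptac.
have AI' : forall y, y \in rcons A t ++ S ++ T' -> y \in I.
  by move=> y yy; apply: AI; move: y yy; memtac.
have hS' : forall s', s' \in S -> d <= `|s' - x1|.
  by move=> s' ss; apply: hS; rewrite inE ss orbT.
have sz' : (size (rcons A t) + size S = m.+1)%N by rewrite size_rcons; move: sz => /=; lia.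
have [h3 h4] := IH (rcons A t) i.+2 (ltn0Sn _) hS' U' AI' sz'.
rewrite !cat_rcons in h3 h4.
have UX : uniq (x1 :: A ++ s :: S) by apply: (@uniq_sub _ _ _ (t :: T') U); ptac.
have UY : uniq (x1 :: A ++ t :: S) by apply: (@uniq_sub _ _ _ (s :: T') U); ptac.
have Uex : uniq [:: x1, t, s & A ++ S] by apply: (@uniq_sub _ _ _ T' U); ptac.
have VX : Vf f x1 (A ++ s :: S) = Vf f x1 (s :: A ++ S) by apply: V_perm => //; ptac.
have VY : Vf f x1 (A ++ t :: S) = Vf f x1 (t :: A ++ S) by apply: V_perm => //; ptac.
have piX : pi x1 (A ++ s :: S) = (x1 - s) * pi x1 (A ++ S).
  by rewrite -pi_cons; apply: pi_perm; ptac.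
have piY : pi x1 (A ++ t :: S) = (x1 - t) * pi x1 (A ++ S).
  by rewrite -pi_cons; apply: pi_perm; ptac.
have Dpos : 0 <= DD f [:: t, s, x1 & A ++ S].
  apply: H.
  - by apply: (@uniq_sub _ _ _ [::] Uex); rewrite cats0; ptac.
  - by rewrite /= size_cat; move: sz => /=; lia.
  - move=> y; rewrite !inE => /orP[/eqP->|/orP[/eqP->|/orP[/eqP->|yy]]] //.
    + by apply: AI; rewrite !(mem_cat, inE) eqxx !orbT.
    + by apply: AI; rewrite !(mem_cat, inE) eqxx !orbT.
    + by apply: AI; move: y yy; memtac.
have pn : pi x1 (A ++ S) != 0.
  have U2 : uniq (x1 :: A ++ S) by apply: (@uniq_sub _ _ _ [:: s] UX); ptac.
  by apply: pi_neq0; case/andP: U2.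
have ex := V_exch f Uex.
apply: (@sign_comb _ _ (pi x1 (A ++ t :: S)) _ _ (Vf f x1 (A ++ t :: S))) => //.
  rewrite piX VX VY ex.
  have -> : (x1 - s) * pi x1 (A ++ S) * (pi x1 (A ++ S) * (t - s) * DD f [:: t, s, x1 & A ++ S])
     = ((x1 - s) * (t - s)) * (pi x1 (A ++ S) * pi x1 (A ++ S)) * DD f [:: t, s, x1 & A ++ S] by ring.
  apply: mulr_ge0 => //; apply: mulr_ge0 => //; exact: ltW (sq_pos pn).
rewrite piX piY.
have -> : (x1 - s) * pi x1 (A ++ S) * ((x1 - t) * pi x1 (A ++ S)) =
   ((x1 - s) * (x1 - t)) * (pi x1 (A ++ S) * pi x1 (A ++ S)) by ring.
by apply: mulr_gt0 => //; apply: sq_pos.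
Qed.

Lemma pi_bound (R : realType) (x1 d : R) L : 0 <= d ->
  (forall y, y \in L -> `|x1 - y| <= d) -> `|pi x1 L| <= d ^+ size L.
Proof.
move=> d0; elim: L => [|y L IH] W; first by rewrite /pi big_nil normr1 expr0.
rewrite pi_cons normrM /= exprS; apply: ler_pM => //.
- by apply: W; rewrite inE eqxx.
- by apply: IH => z zz; apply: W; rewrite inE zz orbT.
Qed.

Lemma chain2 (R : realType) m (f : R -> R) (x1 e d K : R) :
  (forall Z, uniq Z -> size Z = m.+2 -> (forall z, z \in Z -> `|z - x1| <= e / 2) ->
     `|DD f Z| <= K) ->
  0 < d -> d <= e / 2 ->
  forall T A T', size T = size T' ->
  (forall y, y \in A ++ T ++ T' -> `|y - x1| <= d) ->
  uniq (x1 :: A ++ T ++ T') -> (size A + size T = m.+1)%N ->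
  `|Vf f x1 (A ++ T) - Vf f x1 (A ++ T')| <= (size T)%:R * (2 * K * d ^+ m).
Proof.
move=> HK d0 de; elim=> [|t T IH] A T'.
  by case: T' => // _ _ _ _; rewrite subrr normr0 mul0r.
case: T' => [//|t' T'] sT' W U sz.
have sT : size T = size T' by move/eqP: sT'; rewrite /= eqSS => /eqP.
have szAT : (size A + size T = m)%N by move/eqP: sz; rewrite /= addnS eqSS => /eqP.
have U' : uniq (x1 :: rcons A t' ++ T ++ T') by apply: (@uniq_sub _ _ _ [:: t] U); ptac.
have W' : forall y, y \in rcons A t' ++ T ++ T' -> `|y - x1| <= d.
  by move=> y yy; apply: W; move: y yy; memtac.
have sz' : (size (rcons A t') + size T = m.+1)%N by rewrite size_rcons addSnnS; exact: sz.
have := IH (rcons A t') T' sT W' U' sz'; rewrite !cat_rcons => h1.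
have UX : uniq (x1 :: A ++ t :: T) by apply: (@uniq_sub _ _ _ (t' :: T') U); ptac.
have UY : uniq (x1 :: A ++ t' :: T) by apply: (@uniq_sub _ _ _ (t :: T') U); ptac.
have VX : Vf f x1 (A ++ t :: T) = Vf f x1 (t :: A ++ T) by apply: V_perm => //; ptac.
have VY : Vf f x1 (A ++ t' :: T) = Vf f x1 (t' :: A ++ T) by apply: V_perm => //; ptac.
have Wd : forall y, y \in A ++ T -> `|x1 - y| <= d.
  by move=> y yy; rewrite distrC; apply: W; move: y yy; memtac.
have hp : `|pi x1 (A ++ T)| <= d ^+ m.
  have -> : m = size (A ++ T) by rewrite size_cat szAT.
  by apply: pi_bound => //; apply: ltW.
have ed : e / 2 >= d by [].
have hD : forall u, u \in [:: t; t'] -> `|DD f [:: x1, u & A ++ T]| <= K.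
  move=> u uu; apply: HK.
  - move: uu; rewrite !inE => /orP[/eqP->|/eqP->].
      by apply: (@uniq_sub _ _ _ [::] UX); rewrite cats0; ptac.
    by apply: (@uniq_sub _ _ _ [::] UY); rewrite cats0; ptac.
  - by rewrite /= size_cat szAT.
  - move=> z; rewrite !inE => /orP[/eqP->|/orP[/eqP->|zz]].
    + by rewrite subrr normr0; apply: (le_trans (ltW d0)).
    + move: uu; rewrite !inE => /orP[/eqP->|/eqP->]; apply: (le_trans _ ed); apply: W;
      by rewrite !(mem_cat, inE) eqxx ?orbT.
    + by apply: (le_trans _ ed); apply: W; move: z zz; memtac.
have h2 : `|Vf f x1 (A ++ t :: T) - Vf f x1 (A ++ t' :: T)| <= 2 * K * d ^+ m.
  rewrite VX VY /= opprD addrACA subrr add0r -mulrBr normrM mulrC.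
  have hK1 := hD t (mem_head _ _).
  have hK2 : `|DD f [:: x1, t' & A ++ T]| <= K by apply: hD; rewrite !inE eqxx orbT.
  have hK3 : `|DD f [:: x1, t & A ++ T] - DD f [:: x1, t' & A ++ T]| <= 2 * K.
    by apply: (le_trans (ler_normB _ _)); lra.
  by apply: ler_pM; [exact: normr_ge0|exact: normr_ge0|exact: hK3|exact: hp].
apply: (le_trans (ler_distD (Vf f x1 (A ++ t' :: T)) _ _)).
have -> : (size (t :: T))%:R = 1 + (size T)%:R :> R by rewrite /= -addn1 natrD addrC.
rewrite mulrDl mul1r; lra.
Qed.

Lemma ex_small (R : realType) (l : seq R) (b : R) : 0 < b -> (forall x, x \in l -> 0 < x) ->
  exists d, [/\ 0 < d, d <= b & forall x, x \in l -> d <= x].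
Proof.
elim: l => [|a l IH] b0 H; first by exists b; split.
have H' : forall x, x \in l -> 0 < x by move=> x xl; apply: H; rewrite inE xl orbT.
have [d [d0 db dl]] := IH b0 H'.
have a0 : 0 < a by apply: H; rewrite inE eqxx.
exists (Num.min d a); split.
- by rewrite lt_min d0 a0.
- by rewrite ge_min db.
- move=> x; rewrite inE => /orP[/eqP->|xl]; first by rewrite ge_min lexx orbT.
  by rewrite ge_min dl.
Qed.

Lemma uniq_build (R : realType) (x1 : R) (l1 l2 : seq R) :
  uniq (x1 :: l1) -> uniq l2 -> x1 \notin l2 -> (forall a b, a \in l1 -> b \in l2 -> a != b) ->
  uniq (x1 :: l1 ++ l2).
Proof.
rewrite cons_uniq => /andP[x1l1 u1] u2 x1l2 H.
rewrite cons_uniq mem_cat negb_or x1l1 x1l2 cat_uniq u1 u2 andbT /=.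
rewrite andbT; apply/hasPn => b bl2; apply/negP => bl1; by have := H b b bl1 bl2; rewrite eqxx.
Qed.

Lemma claimC (R : realType) m (I : interval R) (f : R -> R) (x1 e : R) :
  convS m.+1 I f -> 0 < e -> (forall y, `|y - x1| < e -> y \in I) ->
  forall S S' : seq R,
  uniq (x1 :: S) -> size S = m.+1 -> (forall y, y \in S -> y \in I) ->
  uniq (x1 :: S') -> size S' = m.+1 -> (forall y, y \in S' -> y \in I) ->
  0 < pi x1 S -> pi x1 S' < 0 -> Vf f x1 S <= Vf f x1 S'.
Proof.
move=> H e0 ball S S' U sz SI U' sz' SI' pS pS'.
have xI : x1 \in I by apply: ball; rewrite subrr normr0.
case: m H sz sz' => [|m] H sz sz'.
  case: S U sz SI pS => [|s [|]] //= U _ SI pS.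
  case: S' U' sz' SI' pS' => [|s' [|]] //= U' _ SI' pS'.
  have ps1 : 0 < x1 - s by move: pS; rewrite pi_cons /pi big_nil mulr1.
  have ps2 : x1 - s' < 0 by move: pS'; rewrite pi_cons /pi big_nil mulr1.
  rewrite -subr_ge0.
  have Ue : uniq [:: x1, s', s & [::]].
    rewrite /= !inE !negb_or; move: U U'; rewrite /= !inE !andbT => -> ->; rewrite andbT /=.
    apply/eqP => E; move: ps1 ps2; rewrite E; lra.
  move: (V_exch f Ue) => /= ->; rewrite /pi big_nil mul1r; apply: mulr_ge0; first lra.
  apply: H => //.
    by apply: (@uniq_sub _ _ _ [::] Ue); rewrite cats0; ptac.
  move=> y; rewrite !inE => /orP[/eqP->|/orP[/eqP->|/eqP->]] //.
    by apply: SI'; rewrite inE eqxx.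
  by apply: SI; rewrite inE eqxx.
have [K HK] := Kbound H e0 ball.
have HK1 : forall Z : seq R, uniq Z -> size Z = m.+3 -> (forall z, z \in Z -> `|z - x1| <= e / 2) ->
   `|DD f Z| <= `|K|.
  by move=> Z uZ sZ wZ; apply: (le_trans (HK Z uZ sZ wZ)); apply: ler_norm.
apply/ler_addgt0Pr => eps eps0.
set C := (m.+2)%:R * (2 * `|K|).
have C0 : 0 <= C by apply: mulr_ge0; [exact: ler0n | apply: mulr_ge0 => //].
set b := Num.min (e / 2) (Num.min 1 (eps / (C + 1))).
have C1 : 0 < C + 1 by lra.
have b0 : 0 < b.
  rewrite /b !lt_min divr_gt0 //= ?ltr01 ?divr_gt0 //.
have pos : forall x, x \in map (fun y => `|y - x1|) (S ++ S') -> 0 < x.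
  move=> x /mapP [y yy ->]; rewrite normr_gt0 subr_eq0; apply/eqP => E.
  move: yy; rewrite mem_cat E => /orP[]; [move: U|move: U']; by rewrite /= => /andP[/negP].
have [d [d0 db dl]] := ex_small b0 pos.
have dS : forall s, s \in S -> d <= `|s - x1|.
  by move=> s ss; apply: dl; apply: map_f; rewrite mem_cat ss.
have dS' : forall s, s \in S' -> d <= `|s - x1|.
  by move=> s ss; apply: dl; apply: map_f; rewrite mem_cat ss orbT.
move: db; rewrite /b !le_min => /and3P[de d1 deps].
set T := tg x1 d 1 S; set T' := tg x1 d 2 S'.
have tT : forall t, t \in T -> 0 < `|t - x1| < d by move=> t; apply: tg_small.
have tT' : forall t, t \in T' -> 0 < `|t - x1| < d by move=> t; apply: tg_small.
have x1T : x1 \notin T by apply/negP => /tT; rewrite subrr normr0 ltxx.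
have x1T' : x1 \notin T' by apply/negP => /tT'; rewrite subrr normr0 ltxx.
have inI : forall y, `|y - x1| < d -> y \in I.
  by move=> y yd; apply: ball; apply: (lt_le_trans yd); apply: (le_trans de); lra.
have UT : uniq (x1 :: S ++ T).
  apply: uniq_build => //; first exact: tg_uniq.
  move=> a c aS cT; apply/eqP => E; have := dS a aS; have := tT c cT; rewrite E; lra.
have UT' : uniq (x1 :: S' ++ T').
  apply: uniq_build => //; first exact: tg_uniq.
  move=> a c aS cT; apply/eqP => E; have := dS' a aS; have := tT' c cT; rewrite E; lra.
have IT : forall y, y \in [::] ++ S ++ T -> y \in I.
  move=> y; rewrite /= mem_cat => /orP[/SI //|/tT /andP[_ h]]; exact: inI.
have IT' : forall y, y \in [::] ++ S' ++ T' -> y \in I.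
  move=> y; rewrite /= mem_cat => /orP[/SI' //|/tT' /andP[_ h]]; exact: inI.
have szS : (size (@nil R) + size S = m.+2)%N by rewrite sz.
have szS' : (size (@nil R) + size S' = m.+2)%N by rewrite sz'.
have [c1 _] := chain1 H xI d0 (A := [::]) (isT : (0 < 1)%N) dS UT IT szS.
have [c2 _] := chain1 H xI d0 (A := [::]) (isT : (0 < 2)%N) dS' UT' IT' szS'.
rewrite /= in c1 c2.
have UTT : uniq (x1 :: T ++ T').
  apply: uniq_build => //; first by rewrite cons_uniq x1T tg_uniq.
    exact: tg_uniq.
  by move=> a c aT cT; apply: (tg_disj d0 aT cT).
have WT : forall y, y \in [::] ++ T ++ T' -> `|y - x1| <= d.
  move=> y; rewrite /= mem_cat => /orP[/tT|/tT'] /andP[_ h]; exact: ltW.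
have sTT : size T = size T' by rewrite !tg_size sz sz'.
have szT : (size (@nil R) + size T = m.+2)%N by rewrite tg_size sz.
have c3 := chain2 HK1 d0 de sTT WT UTT szT.
rewrite /= tg_size sz in c3.
have dm : d ^+ m.+1 <= d.
  rewrite exprS; apply: ler_piMr; [exact: ltW | apply: exprn_ile1 => //; exact: ltW].
have Cd : C * d <= eps by move: deps; rewrite ler_pdivlMr // => h; nra.
have c4 : `|Vf f x1 T - Vf f x1 T'| <= eps.
  apply: (le_trans c3); apply: le_trans Cd; rewrite mulrA; apply: ler_wpM2l => //.
move: c1; rewrite pmulr_rge0 // subr_ge0 => c1.
move: c2; rewrite nmulr_rge0 // subr_le0 => c2.
move: c4; rewrite ler_norml => /andP[c4 c5].
lra.
Qed.

Lemma pi_tg_left (R : realType) (x1 d : R) k : 0 < d -> forall i,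
  0 < pi x1 (tg x1 d i (nseq k (x1 - 1))).
Proof.
move=> d0; elim: k => [|k IH] i; first by rewrite /pi big_nil ltr01.
have h : x1 - 1 < x1 by lra.
rewrite /= h pi_cons; apply: mulr_gt0 => //.
by rewrite opprB addrC subrK divr_gt0 // ltr0n.
Qed.

Lemma extE (R : realType) m (I : interval R) (f : R -> R) (x1 : R) :
  convS m.+1 I f -> in_interior I x1 -> exists c, convS m I (gext f x1 c).
Proof.
move=> H [e [e0 ball]].
have xI : x1 \in I by apply: ball; rewrite subrr normr0.
have e2 : 0 < e / 2 by rewrite divr_gt0.
set E := fun v : R => exists S, [/\ uniq (x1 :: S), size S = m.+1,
   (forall y, y \in S -> y \in I), 0 < pi x1 S & v = Vf f x1 S].
have tgok : forall L, let T := tg x1 (e / 2) 1 L in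
   [/\ uniq (x1 :: T), size T = size L & forall y, y \in T -> y \in I].
  move=> L T; split.
  - rewrite cons_uniq tg_uniq // andbT; apply/negP => xT.
    by have := tg_small e2 (isT : (0 < 1)%N) xT; rewrite subrr normr0 ltxx.
  - by rewrite tg_size.
  - move=> y yT; have /andP[_ h] := tg_small e2 (isT : (0 < 1)%N) yT.
    by apply: ball; apply: (lt_trans h); lra.
set S0 := tg x1 (e / 2) 1 (nseq m.+1 (x1 - 1)).
set S1 := tg x1 (e / 2) 1 ((x1 + 1) :: nseq m (x1 - 1)).
have [U0 sz0 I0] := tgok (nseq m.+1 (x1 - 1)).
have [U1 sz1 I1] := tgok ((x1 + 1) :: nseq m (x1 - 1)).
rewrite size_nseq in sz0; rewrite /= size_nseq in sz1.
have p0 : 0 < pi x1 S0 by apply: pi_tg_left.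
have p1 : pi x1 S1 < 0.
  have h : (x1 + 1 < x1) = false by apply/negbTE; rewrite -leNgt; lra.
  rewrite /S1 /= h pi_cons pmulr_llt0; last by apply: pi_tg_left.
  by rewrite opprD addrA subrr sub0r oppr_lt0 divr_gt0 // ltr0n.
have ub : forall S, uniq (x1 :: S) -> size S = m.+1 -> (forall y, y \in S -> y \in I) ->
    pi x1 S < 0 -> forall v, E v -> v <= Vf f x1 S.
  move=> S U sz SI pS v [S' [U' sz' SI' pS' ->]].
  exact: (claimC H e0 ball U' sz' SI' U sz SI pS' pS).
have hE : classical_sets.has_ubound E.
  by exists (Vf f x1 S1) => v; apply: ub.
have nE : classical_sets.nonempty E by exists (Vf f x1 S0), S0.
exists (sup E) => Y uY sY YI.
case: (boolP (x1 \in Y)) => xY.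
  have P := perm_to_rem xY.
  set S := rem x1 Y in P.
  have U : uniq (x1 :: S) by rewrite -(perm_uniq P).
  have sz : size S = m.+1 by rewrite size_rem // sY.
  have SI : forall y, y \in S -> y \in I by move=> y /mem_rem; apply: YI.
  rewrite (DD_perm _ P) V_rel //.
  have pn : pi x1 S != 0 by apply: pi_neq0; case/andP: U.
  case: (ltgtP (pi x1 S) 0) => [pS|pS|/eqP]; last by rewrite (negbTE pn).
    have h : sup E <= Vf f x1 S by apply: ge_sup => //; apply: ub.
    by rewrite -mulrNN -invrN opprB divr_ge0 // ?subr_ge0 // oppr_ge0 ltW.
  have h : Vf f x1 S <= sup E by apply: ub_le_sup => //; exists S.
  by rewrite divr_ge0 // ?subr_ge0 // ltW.
have Yn : Y != [::] by apply/eqP => Y0; move: sY; rewrite Y0.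
rewrite DD_gext //; last by rewrite cons_uniq xY.
apply: H.
- by rewrite cons_uniq xY.
- by rewrite /= sY.
- by move=> y; rewrite inE => /orP[/eqP->|/YI].
Qed.

Lemma main_odd (R : realType) (I : interval R) k : forall (f : R -> R) (x1 : R),
  convS k.*2.+1 I f -> in_interior I x1 ->
  exists p : {poly R},
    (size p <= k.*2.+2)%N /\ p.[x1] = f x1 /\ (forall x : R, x \in I -> p.[x] <= f x).
Proof.
elim: k => [|k IH] f x1 H hx.
  have [c Hc] := extE H hx.
  exists ((f x1)%:P + c *: ('X - x1%:P)); split; last split.
  - apply: (leq_trans (size_polyD _ _)); rewrite geq_max.
    apply/andP; split; first by apply: (leq_trans (size_polyC_leq1 _)).
    by apply: (leq_trans (size_scale_leq _ _)); rewrite size_XsubC.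
  - by rewrite !hornerE subrr mulr0 addr0.
  move=> y yI; rewrite !hornerE.
  have [->|yx] := eqVneq y x1; first by rewrite subrr mulr0 addr0.
  have xI : x1 \in I by case: hx => e [e0 b]; apply: b; rewrite subrr normr0.
  have := Hc [:: y; x1]; rewrite DD2 // /gext eqxx (negbTE yx).
  have := yx; rewrite -subr_eq0 => yx'.
  move=> /(_ _ erefl) h.
  have {}h : 0 <= ((f y - f x1) / (y - x1) - c) / (y - x1).
    apply: h; first by rewrite /= inE yx.
    by move=> z; rewrite !inE => /orP[/eqP->|/eqP->].
  have -> : f y = f x1 + c * (y - x1) + (y - x1) ^+ 2 * (((f y - f x1) / (y - x1) - c) / (y - x1)).
    by field.
  by rewrite lerDl mulr_ge0 // sqr_ge0.
have H' : convS (k.*2.+2).+1 I f by rewrite doubleS in H.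
have [c Hc] := extE H' hx.
have [d Hd] := extE Hc hx.
have [r [sr [rx rI]]] := IH _ _ Hd hx.
rewrite doubleS.
exists ((f x1)%:P + ('X - x1%:P) * (c%:P + ('X - x1%:P) * r)); split; last split.
- apply: (leq_trans (size_polyD _ _)); rewrite geq_max.
  apply/andP; split; first by apply: (leq_trans (size_polyC_leq1 _)).
  apply: (leq_trans (size_polyMleq _ _)); rewrite size_XsubC /=.
  apply: (leq_trans (size_polyD _ _)); rewrite geq_max.
  apply/andP; split; first by apply: (leq_trans (size_polyC_leq1 _)).
  apply: (leq_trans (size_polyMleq _ _)); rewrite size_XsubC /=.
  by apply: (leq_trans sr).
- by rewrite !hornerE subrr !mul0r addr0.
move=> y yI; rewrite !hornerE.
have [->|yx] := eqVneq y x1; first by rewrite subrr !mul0r addr0.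
have yx' : y - x1 != 0 by rewrite subr_eq0.
have := rI y yI; rewrite /gext (negbTE yx) eqxx => h.
move: h; set q := r.[y] => h.
have -> : f y = f x1 + (y - x1) * (c + (y - x1) * q) +
   (y - x1) ^+ 2 * ((((f y - f x1) / (y - x1) - c) / (y - x1)) - q).
  by field.
by rewrite lerDl mulr_ge0 // ?sqr_ge0 // subr_ge0.
Qed.

Unset Implicit Arguments.

Theorem corollary1 (R : realType) (I : interval R) (n : nat) (f : R -> R) :
  odd n -> n_convex n I f ->
  forall x1 : R, in_interior I x1 ->
  exists p : {poly R},
    (size p <= n.+1)%N /\ p.[x1] = f x1 /\ (forall x : R, x \in I -> p.[x] <= f x).
Proof.
move=> on Hn x1 hx.
have Hc := nconv_convS Hn.
have E : n = (n./2).*2.+1 by rewrite -[n in LHS]odd_double_half on add1n.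
rewrite E in Hc *.
exact: main_odd Hc hx.
Qed.
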